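(* Consider the nonpreemptive Lazy Bureaucrat Problem in which every job has unit processing time ($t_1=\cdots=t_n=1$) and all data are integers. The Latest Due Date (LDD) policy — at each integer time $\tau$ at which the processor is free, if some job is executable at $\tau$, start an executable job with the largest deadline (ties broken arbitrarily) — produces a feasible schedule that minimizes objective (1), the total amount of executed work, over all feasible schedules.
   Context: An instance of the Lazy Bureaucrat Problem (LBP) consists of jobs $1,\dots,n$; job $i$ has a processing time $t_i$, an arrival time $a_i$ and a deadline $d_i$, all nonnegative integers. Its critical time is $c_i=d_i-t_i$. A single processor (the bureaucrat) processes at most one job at a time. In the nonpreemptive setting, a schedule chooses a set of executed jobs and, for each executed job $i$, a start time $s_i$ with $a_i\le s_i\le c_i$; job $i$ is then processed without interruption during $[s_i,s_i+t_i)$, these intervals are pairwise disjoint, and each job is executed at most once. A job $i$ is executable at time $\tau$ if it has not been started before $\tau$ and $a_i\le\tau\le c_i$. A schedule is feasible if it satisfies the busy requirement: at every time $\tau$ at which the processor is not processing a job, no job is executable. Objective (1) is the total time spent working, $\sum t_i$ over executed jobs, to be minimized over feasible schedules. *)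

(* Defs.v *)
From HB Require Import structures.
From mathcomp Require Import all_boot all_order all_algebra.
From mathcomp Require Import reals.
Set Implicit Arguments. Unset Strict Implicit. Unset Printing Implicit Defensive.
Import Order.TTheory GRing.Theory Num.Theory.
Local Open Scope ring_scope.

Section LBP.
Variables (R : realType) (n : nat).

(* An instance: processing times t, arrival times a, deadlines d (nonnegative
   integers), jobs indexed by 'I_n.  Critical time c_i = d_i - t_i (in R, so
   it may be negative). *)
Variables (t a d : 'I_n -> nat).

Definition crit (i : 'I_n) : R := (d i)%:R - (t i)%:R.

Definition processing (E : {set 'I_n}) (s : 'I_n -> R) (tau : R) : Prop :=
  exists2 i, i \in E & s i <= tau < s i + (t i)%:R.

Definition executable (E : {set 'I_n}) (s : 'I_n -> R) (j : 'I_n) (tau : R)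
  : Prop :=
  ~ (j \in E /\ s j < tau) /\ (a j)%:R <= tau <= crit j.

Definition feasible (E : {set 'I_n}) (s : 'I_n -> R) : Prop :=
  (forall i, i \in E -> (a i)%:R <= s i <= crit i) /\
  (forall i j, i \in E -> j \in E -> i != j ->
      s i + (t i)%:R <= s j \/ s j + (t j)%:R <= s i) /\
  (forall tau : R, ~ processing E s tau -> forall j, ~ executable E s j tau).

Definition work (E : {set 'I_n}) : nat := \sum_(i in E) t i.

Definition free_at (E : {set 'I_n}) (s : 'I_n -> R) (tau : R) : Prop :=
  ~ (exists2 i, i \in E & s i < tau < s i + (t i)%:R).

(* (E, s) is a schedule produced by the LDD policy (with some tie-breaking):
   decisions are taken only at integer times; at each integer time tau at
   which the processor is free, if some job is executable, an executable job
   with the largest deadline is started at tau (and only one job); no job is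
   started otherwise. *)
Definition LDD_schedule (E : {set 'I_n}) (s : 'I_n -> R) : Prop :=
  (forall i, i \in E -> exists k : nat, s i = k%:R) /\
  (forall i j, i \in E -> j \in E -> s i = s j -> i = j) /\
  (forall (tau : nat) i, i \in E -> s i = tau%:R ->
     [/\ free_at E s tau%:R, executable E s i tau%:R &
         forall j, executable E s j tau%:R -> (d j <= d i)%N]) /\
  (forall tau : nat, free_at E s tau%:R ->
     (exists j, executable E s j tau%:R) ->
     exists2 i, i \in E & s i = tau%:R).

End LBP.

(* Main.v *)
Require Import Defs.
From HB Require Import structures.
From mathcomp Require Import all_boot all_order all_algebra.
From mathcomp Require Import reals.
From mathcomp Require Import ring lra zify.
Set Implicit Arguments. Unset Strict Implicit. Unset Printing Implicit Defensive.
Import Order.TTheory GRing.Theory Num.Theory.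

Section Comb.
Variables (n : nat) (a d : 'I_n -> nat).

Definition avail (B : {set 'I_n}) (tau : nat) (j : 'I_n) : bool :=
  [&& j \notin B, a j <= tau & tau < d j].
Definition Rset (B : {set 'I_n}) (tau th : nat) : {set 'I_n} :=
  [set j | [&& j \notin B, a j <= tau & th < d j]].
Definition Nset (tau th : nat) : {set 'I_n} := [set j | (a j == tau) && (th < d j)].

Definition step_ok (B : nat -> {set 'I_n}) tau :=
  (B tau.+1 = B tau /\ forall j, ~~ avail (B tau) tau j) \/
  exists2 x, avail (B tau) tau x & B tau.+1 = x |: B tau.
Definition step_ldd (B : nat -> {set 'I_n}) tau :=
  (B tau.+1 = B tau /\ forall j, ~~ avail (B tau) tau j) \/
  exists x, [/\ avail (B tau) tau x, (forall j, avail (B tau) tau j -> d j <= d x)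
             & B tau.+1 = x |: B tau].

Lemma R_succ (B : {set 'I_n}) tau th : (forall j, j \in B -> a j <= tau) ->
  #|Rset B tau.+1 th| = #|Rset B tau th| + #|Nset tau.+1 th|.
Proof.
move=> HB.
have -> : Rset B tau.+1 th = Rset B tau th :|: Nset tau.+1 th.
  apply/setP => j; rewrite !inE.
  case: (boolP (j \in B)) => jB /=.
    have := HB j jB; case: (a j == tau.+1) /eqP => [->|_]; first by rewrite ltnn.
    by [].

  rewrite leq_eqVlt ltnS.
  by case: (a j == tau.+1); case: (a j <= tau); case: (th < d j).
rewrite cardsU.
have -> : Rset B tau th :&: Nset tau.+1 th = set0.
  apply/setP => j; rewrite !inE.
  by case: (a j == tau.+1) /eqP => [->|]; [rewrite ltnn /= andbF | rewrite andbF].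
by rewrite cards0 subn0.
Qed.

Lemma R_rem (B : {set 'I_n}) tau th x : avail B tau x ->
  #|Rset B tau th| = (th < d x) + #|Rset (x |: B) tau th|.
Proof.
move=> /and3P[xB xa xd].
rewrite (cardsD1 x) !inE xB xa /=; congr (_ + _); apply: eq_card => j.
rewrite !inE negb_or.
by case: (j == x).
Qed.

Lemma R_mono (B : {set 'I_n}) tau th th' : th <= th' -> #|Rset B tau th'| <= #|Rset B tau th|.
Proof.
move=> le; apply: subset_leq_card; apply/subsetP => j; rewrite !inE.
case/and3P=> -> -> /= h; exact: leq_ltn_trans le h.
Qed.

Lemma R_avail (B : {set 'I_n}) tau th j : tau <= th -> j \in Rset B tau th -> avail B tau j.
Proof.
move=> le; rewrite /avail !inE => /and3P[-> -> h]; rewrite /=; exact: leq_ltn_trans le h.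
Qed.

Lemma R_big (B : {set 'I_n}) tau th : (forall j, d j <= th) -> #|Rset B tau th| = 0.
Proof.
move=> H; apply/eqP; rewrite cards_eq0; apply/eqP/setP => j; rewrite !inE.
by rewrite ltnNge H !andbF.
Qed.

Definition Inv (BL BS : {set 'I_n}) tau :=
  forall th, tau <= th -> #|BL| + #|Rset BL tau th| <= #|BS| + #|Rset BS tau th|.

Lemma noavail_R (B : {set 'I_n}) tau th : tau <= th -> (forall j, ~~ avail B tau j) -> #|Rset B tau th| = 0.
Proof.
move=> le H; apply/eqP; rewrite cards_eq0; apply/eqP/setP => j; rewrite in_set0.
apply/negP => hj; have := H j; rewrite (R_avail le hj) //.
Qed.

Lemma Inv_step (BL BS : nat -> {set 'I_n}) tau :
  (forall j, d j <= \max_i d i) ->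
  (forall j, j \in BL tau.+1 -> a j <= tau) ->
  (forall j, j \in BS tau.+1 -> a j <= tau) ->
  step_ldd BL tau -> step_ok BS tau ->
  Inv (BL tau) (BS tau) tau -> Inv (BL tau.+1) (BS tau.+1) tau.+1.
Proof.
move=> Hmax RL RS sL sS I th le.
rewrite (R_succ _ RL) (R_succ _ RS).
suff: #|BL tau.+1| + #|Rset (BL tau.+1) tau th| <= #|BS tau.+1| + #|Rset (BS tau.+1) tau th| by lia.
have leth : tau <= th by lia.
have Ith := I th leth.
have I0 := I tau (leqnn _).
have Iinf := I (tau + \max_i d i) (leq_addr _ _).
rewrite (R_big _ _ (th := tau + \max_i d i)) in Iinf; last by move=> j; have := Hmax j; lia.
rewrite (R_big _ _ (th := tau + \max_i d i)) in Iinf; last by move=> j; have := Hmax j; lia.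
have mL := R_mono (BL tau) tau leth.
have mS := R_mono (BS tau) tau leth.
case: sL => [[-> noL]|[x [ax maxx ->]]].
  have := noavail_R leth noL => r0.
  case: sS => [[-> noS]|[y ay ->]].
    lia.
  have := R_rem th ay.
  rewrite cardsU1; move: ay => /and3P[-> _ _].
  case: (th < d y); lia.
have := R_rem th ax.
rewrite cardsU1; move: (ax) => /and3P[-> _ _].
have x0 : 1 <= #|Rset (BL tau) tau tau|.
  rewrite card_gt0; apply/set0Pn; exists x; move: (ax) => /and3P[h1 h2 h3]; by rewrite inE h1 h2 h3.
have ex : 0 < #|Rset (BL tau) tau th| -> th < d x.
  rewrite card_gt0 => /set0Pn[j hj]; have := maxx j (R_avail leth hj).
  move: hj; rewrite inE => /and3P[_ _ h] h'; exact: leq_trans h h'.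
case: sS => [[-> noS]|[y ay ->]].
  have := noavail_R leth noS => r0.
  have := noavail_R (leqnn tau) noS => r00.
  move: ex; case: (th < d x); case: (0 < #|Rset (BL tau) tau th|) /idP; lia.
have := R_rem th ay.
rewrite cardsU1; move: ay => /and3P[-> _ _].
move: ex; case: (th < d x); case: (th < d y); case: (0 < #|Rset (BL tau) tau th|) /idP; lia.
Qed.

Lemma comb_main (BL BS : nat -> {set 'I_n}) :
  BL 0 = set0 -> BS 0 = set0 ->
  (forall tau j, j \in BL tau -> a j < tau) ->
  (forall tau j, j \in BS tau -> a j < tau) ->
  (forall tau, step_ldd BL tau) -> (forall tau, step_ok BS tau) ->
  forall tau, #|BL tau| <= #|BS tau|.
Proof.
move=> L0 S0 RL RS sL sS.
have Hmax : forall j, d j <= \max_i d i by move=> j; exact: leq_bigmax.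
have I : forall tau, Inv (BL tau) (BS tau) tau.
  elim=> [|tau IH]; first by rewrite L0 S0 => th _.
  apply: Inv_step => //; [move=> j /RL | move=> j /RS]; by rewrite ltnS.
move=> tau; have := I tau (tau + \max_i d i) (leq_addr _ _).
rewrite !(R_big _ _ (th := tau + \max_i d i)); try (move=> j; have := Hmax j; lia).
by rewrite !addn0.
Qed.

End Comb.


Section Constr.
Variables (n : nat) (a d : 'I_n -> nat).

Definition avb (p : seq (option 'I_n)) tau (j : 'I_n) : bool :=
  [&& Some j \notin p, a j <= tau & tau < d j].
Definition ch tau p : option 'I_n :=
  [pick j | avb p tau j && [forall k, avb p tau k ==> (d k <= d j)]].
Fixpoint hist tau := if tau is t'.+1 then rcons (hist t') (ch t' (hist t')) else [::].

Lemma size_hist m : size (hist m) = m.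
Proof. by elim: m => //= m IH; rewrite size_rcons IH. Qed.

Lemma take_hist tau m : tau <= m -> take tau (hist m) = hist tau.
Proof.
elim: m => [|m IH]; first by rewrite leqn0 => /eqP ->.
rewrite leq_eqVlt => /orP[/eqP ->|]; first by rewrite -{1}(size_hist m.+1) take_size.
rewrite ltnS => le; rewrite /= -cats1 takel_cat ?IH // size_hist //.
Qed.

Lemma nth_hist tau m : tau < m -> nth None (hist m) tau = ch tau (hist tau).
Proof.
move=> lt; rewrite -(nth_take _ (ltnSn tau)) take_hist //=.
by rewrite nth_rcons size_hist ltnn eqxx.
Qed.

Lemma ch_some tau p i : ch tau p = Some i ->
  avb p tau i /\ forall k, avb p tau k -> d k <= d i.
Proof.
rewrite /ch; case: pickP => // x /andP[h /forallP H] [<-]; split => // k hk.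
by have := H k; rewrite hk.
Qed.

Lemma ch_none tau p j : avb p tau j -> exists i, ch tau p = Some i.
Proof.
move=> hj; rewrite /ch; case: pickP => [x _|H]; first by exists x.
case: (arg_maxnP d hj) => i hi Hi.
have := H i; rewrite hi /=; case/negP; apply/forallP => k; apply/implyP; exact: Hi.
Qed.

Variable T : nat.
Local Notation h := (hist T).

Lemma idx_nth tau i : tau < T -> nth None h tau = Some i -> index (Some i) h = tau.
Proof.
move=> lt e; have := e; rewrite nth_hist // => /ch_some[/and3P[ni _ _] _].
rewrite -(cat_take_drop tau h) index_cat take_hist ?(ltnW lt) // (negbTE ni).
rewrite (drop_nth None) ?size_hist // e /= eqxx ?size_hist ?addn0 //.
Qed.

Lemma in_take_idx tau j : tau <= T -> Some j \in hist tau ->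
  Some j \in h /\ index (Some j) h < tau.
Proof.
move=> le hj; rewrite -(take_hist le) in hj; split; first exact: mem_take hj.
rewrite -(cat_take_drop tau h) index_cat hj.
apply: leq_trans (_ : size (take tau h) <= tau); first by rewrite index_mem.
by rewrite size_take; case: ifP => // /negbT; rewrite -leqNgt.
Qed.

End Constr.

Section Real.
Variables (R : realType) (n : nat) (a d : 'I_n -> nat).
Local Notation t1 := (fun _ : 'I_n => 1%N).
Local Open Scope ring_scope.

Lemma critE i : crit R t1 d i = (d i)%:R - 1.
Proof. by rewrite /crit. Qed.

Definition Bset (E : {set 'I_n}) (s : 'I_n -> R) (tau : nat) : {set 'I_n} :=
  [set i in E | s i + 1 <= tau%:R].

Lemma natS (k : nat) : (k.+1)%:R = k%:R + 1 :> R.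
Proof. by rewrite natr1. Qed.

Section Feas.
Variables (E : {set 'I_n}) (s : 'I_n -> R).
Hypothesis F : feasible t1 a d E s.

Lemma feas_win i : i \in E -> (a i)%:R <= s i <= (d i)%:R - 1.
Proof. by case: F => H _ iE; rewrite -critE; apply: H. Qed.

Lemma feas_rel tau j : j \in Bset E s tau -> (a j < tau)%N.
Proof.
rewrite inE => /andP[jE h]; have /andP[h1 _] := feas_win jE.
rewrite -(ltr_nat R); lra.
Qed.

Lemma feas_B0 : Bset E s 0 = set0.
Proof.
apply/setP => j; rewrite !inE; apply/negP => /andP[jE h].
have /andP[h1 _] := feas_win jE.
have : 0 <= (a j)%:R :> R by [].
lra.
Qed.

Lemma feas_final : Bset E s (\max_i d i) = E.
Proof.
apply/setP => j; rewrite !inE; case: (boolP (j \in E)) => //= jE.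
have /andP[_ h2] := feas_win jE.
have : (d j)%:R <= (\max_i d i)%:R :> R by rewrite ler_nat leq_bigmax.
lra.
Qed.

Lemma feas_step tau : step_ok a d (Bset E s) tau.
Proof.
case: F => Fw [Fd Fb].
case: (boolP [exists x, [&& x \in E, tau%:R < s x + 1 & s x <= tau%:R]]).
  case/existsP => x /and3P[xE h1 h2]; right; exists x.
    have /andP[w1 w2] := feas_win xE.
    rewrite /avail !inE xE /= -!(ltr_nat R) -(ler_nat R).
    apply/and3P; split; [rewrite -ltNge; lra | lra | lra].
  apply/setP => i; rewrite !inE natS.
  case: (eqVneq i x) => [->|ix] /=; first by rewrite xE; lra.
  case: (boolP (i \in E)) => //= iE.
  case: (lerP (s i + 1) tau%:R) => h; first by apply/idP; lra.
  apply/negP => h'.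
  have := Fd i x iE xE ix; simpl; lra.
rewrite negb_exists => /forallP H; left; split.
  apply/setP => i; rewrite !inE natS.
  case: (boolP (i \in E)) => //= iE.
  have := H i; rewrite iE /=.
  case: (lerP (s i + 1) tau%:R) => h /=; first by move=> _; apply/idP; lra.
  rewrite -ltNge => h'; apply/negP; lra.
move=> j; apply/negP; rewrite /avail !inE => /and3P[jB ja jd].
case: (boolP ((j \in E) && (s j < tau%:R))) => [/andP[jE js]|hne].
  move: jB; rewrite jE /= -ltNge => h; have := H j; rewrite jE /=.
  rewrite h /=; apply/negP; rewrite negbK; lra.
apply: (Fb tau%:R _ j).
  case=> i iE /andP[h1 h2]; have := H i; rewrite iE /= h2 h1.
  done.
split; first by move/andP: hne.
rewrite critE (ler_nat R) ja /=.
move: jd; rewrite -(ler_nat R) natS; lra.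
Qed.

End Feas.

Section LDD.
Variables (E : {set 'I_n}) (s : 'I_n -> R).
Hypothesis L : LDD_schedule t1 a d E s.

Lemma ldd_int i : i \in E -> exists k : nat, s i = k%:R.
Proof. by case: L => H _; apply: H. Qed.

Lemma ldd_free (k : nat) : free_at t1 E s k%:R.
Proof.
case=> i iE /=; have [m ->] := ldd_int iE; rewrite -natS !ltr_nat.
lia.
Qed.

Lemma ldd_feas : feasible t1 a d E s.
Proof.
case: L => L1 [L2 [L3 L4]].
split.
  move=> i iE; have [k sk] := L1 i iE; have [_ [_ /andP[h1 h2]] _] := L3 k i iE sk.
  by rewrite sk h1 h2.
split.
  move=> i j iE jE ij; have [k sk] := L1 i iE; have [m sm] := L1 j jE.
  rewrite sk sm /=; case: (ltngtP k m) => h.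
  - by left; rewrite -natS ler_nat.
  - by right; rewrite -natS ler_nat.
  - by move: ij; rewrite (L2 i j iE jE) ?eqxx // sk sm h.
move=> tau Hnp j [Hns /andP[ha hc]].
have t0 : 0 <= tau by apply: le_trans ha.
have /andP[k1 k2] := truncn_itv t0.
set k := Num.truncn tau in k1 k2.
have [i iE si] : exists2 i, i \in E & s i = k%:R.
  apply: L4; first exact: ldd_free.
  exists j; split.
    by case=> jE js; apply: Hns; split => //; apply: lt_le_trans js k1.
  apply/andP; split; last by apply: le_trans hc.
  rewrite ler_nat -ltnS -(ltr_nat R); apply: le_lt_trans ha k2.
apply: Hnp; exists i => //=; rewrite si k1 /=; rewrite natS in k2; exact: k2.
Qed.

Lemma ldd_step tau : step_ldd a d (Bset E s) tau.
Proof.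
case: (feas_step ldd_feas tau) => [h|[x ax eB]]; first by left.
right; exists x; split => // j aj.
case: L => L1 [L2 [L3 L4]].
have := setU11 x (Bset E s tau); rewrite -eB inE => /andP[xE xs].
move: (ax) => /and3P[]; rewrite inE xE /= -ltNge => xs' _ _.
have [k sk] := L1 x xE.
have ktau : k = tau.
  move: xs xs'; rewrite sk -!natS ler_nat ltr_nat; lia.
have [_ _ Hm] := L3 tau x xE ltac:(by rewrite sk ktau).
apply: Hm; move: aj => /and3P[jB ja jd]; split.
  case=> jE js; move: jB; rewrite inE jE /=; have [m sm] := L1 j jE.
  move: js; rewrite sm -natS !ltr_nat ler_nat; lia.
rewrite critE (ler_nat R) ja /=.
move: jd; rewrite -(ler_nat R) natS; lra.
Qed.

End LDD.

Lemma int_free (E : {set 'I_n}) (s : 'I_n -> R) :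
  (forall i, i \in E -> exists k : nat, s i = k%:R) ->
  forall k : nat, free_at t1 E s k%:R.
Proof.
move=> H k; case=> i iE /=; have [m ->] := H i iE; rewrite -natS !ltr_nat.
lia.
Qed.

Let T := (\max_i d i)%N.
Let h := hist a d T.
Let E0 := [set i | Some i \in h].
Let s0 (i : 'I_n) : R := (index (Some i) h)%:R.

Lemma exec_avb j (tau : nat) : executable t1 a d E0 s0 j tau%:R ->
  (tau < T)%N /\ avb a d (hist a d tau) tau j.
Proof.
case=> Hns /andP[ha hc].
have td : (tau < d j)%N by rewrite -(ler_nat R) natS; rewrite critE in hc; lra.
split; first by rewrite /T; exact: (leq_trans td (leq_bigmax j)).
rewrite /avb td andbT -(ler_nat R) ha andbT; apply/negP => hj.
have [hjT ilt] := in_take_idx (ltnW (leq_trans td (leq_bigmax j))) hj.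
apply: Hns; split; first by rewrite inE.
by rewrite /s0 ltr_nat.
Qed.

Lemma ldd_exists : exists E (s : 'I_n -> R), LDD_schedule t1 a d E s.
Proof.
exists E0, s0.
have L1 : forall i, i \in E0 -> exists k : nat, s0 i = k%:R.
  by move=> i _; exists (index (Some i) h).
have Hidx : forall i, i \in E0 ->
   [/\ (index (Some i) h < T)%N & nth None h (index (Some i) h) = Some i].
  move=> i; rewrite inE => hi; split; last exact: nth_index.
  by have := index_mem (Some i) h; rewrite hi size_hist.
split => //; split.
  move=> i j iE jE /eqP; rewrite /s0 eqr_nat => /eqP e.
  have [_ ei] := Hidx i iE; have [_ ej] := Hidx j jE.
  by move: ei; rewrite e ej => -[].
split.
  move=> tau i iE si.
  have [iT ei] := Hidx i iE.
  have itau : index (Some i) h = tau by apply/eqP; rewrite -(eqr_nat R) -si.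
  rewrite itau in iT ei; rewrite nth_hist // in ei.
  have [/and3P[_ ha hd] Hm] := ch_some ei.
  split; first exact: int_free.
    split; first by case=> _; rewrite si ltxx.
    rewrite critE ler_nat ha /=; move: hd; rewrite -(ler_nat R) natS; lra.
  by move=> j /exec_avb[_ hj]; apply: Hm.
move=> tau _ [j /exec_avb[tT hj]].
have [i ei] := ch_none hj.
have hn : nth None h tau = Some i by rewrite nth_hist.
have iE : i \in E0 by rewrite inE -hn mem_nth // size_hist.
exists i => //; rewrite /s0 (idx_nth tT hn) //.
Qed.

End Real.

Theorem theorem3 (R : realType) (n : nat) (a d : 'I_n -> nat) :
  (exists E (s : 'I_n -> R), LDD_schedule (fun _ => 1%N) a d E s) /\
  (forall E (s : 'I_n -> R), LDD_schedule (fun _ => 1%N) a d E s ->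
     feasible (fun _ => 1%N) a d E s /\
     forall E' (s' : 'I_n -> R), feasible (fun _ => 1%N) a d E' s' ->
       (work (fun _ => 1%N) E <= work (fun _ => 1%N) E')%N).
Proof.
split; first exact: ldd_exists.
move=> E s L; have F := ldd_feas L; split => // E' s' F'.
rewrite /work !sum1_card.
have := @comb_main n a d (Bset E s) (Bset E' s') (feas_B0 F) (feas_B0 F')
  (feas_rel F) (feas_rel F') (ldd_step L) (feas_step F') (\max_i d i).
by rewrite (feas_final F) (feas_final F').
Qed.
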